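(* Fix $\omega$, let $v$ be a blocked path, let $\hat v(i)=v(i-\delta)+2\delta v'(i-\delta)$ for $i\in\mathbb{Z}$ and $\Delta_d\hat v(i)=\hat v(i+1)-2\hat v(i)+\hat v(i-1)$. Let $\hat F=F\int_{\delta}^{1-\delta}\chi_A^\varepsilon(x)\,dx$. Then $F(1-2(\delta+\varepsilon))\le\hat F\le(1-2\delta)F$, and for every $i\in\mathbb{Z}$ $$-2\delta\big[v'(i-1+\delta)-v'(i-1-\delta)\big]\le\Delta_d\hat v(i)+\hat F\le(1+2\delta)\big[v'(i+\delta)-v'(i-\delta)\big].$$
   Context: Fix $0<\delta\ll1/2$, $F>0$ and $\varepsilon\in(0,\tfrac12-\delta)$. Let $\mathbb{Z}^*=\mathbb{Z}+\tfrac12$, $b_{i,j}=(i,j)$; $\phi\in C_c^\infty(\mathbb{R}^2)$ nonnegative with support in $[-\delta,\delta]^2$, $\phi_{i,j}(x,s)=\phi((x,s)-b_{i,j})$; $(l(i,j)(\omega))_{(i,j)\in\mathbb{Z}\times\mathbb{Z}^*}$ nonnegative (i.i.d. exponential) random variables. Let $A=\mathbb{R}\setminus\bigcup_{i\in\mathbb{Z}}(i-\delta,i+\delta)$, $A_\varepsilon=\mathbb{R}\setminus\bigcup_{i\in\mathbb{Z}}(i-\delta-\varepsilon,i+\delta+\varepsilon)$, and $\chi_A^\varepsilon$ a smooth $1$-periodic function with $\chi_{A_\varepsilon}\le\chi_A^\varepsilon\le\chi_A$. A blocked path is a function $v\in C^1_{loc}(\mathbb{R})$ such that for every $i\in\mathbb{Z}$: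 $v''(x)=-F\chi_A^\varepsilon(x)$ on $(i+\delta,i+1-\delta)$ and $v''(x)=\sum_{j\in\mathbb{Z}^*}l(i,j)(\omega)\phi_{i,j}(x,v(x))$ on $(i-\delta,i+\delta)$. *)

(* Defs.v *)
From Stdlib Require Import Reals Lra ZArith List ClassicalDescription.
From Coquelicot Require Import Coquelicot.
Open Scope R_scope.
Import ListNotations.

Definition inA (delta x : R) : Prop := forall i : Z, Rabs (x - IZR i) >= delta.
Definition inAeps (delta eps x : R) : Prop :=
  forall i : Z, Rabs (x - IZR i) >= delta + eps.

Definition indic (P : R -> Prop) (x : R) : R :=
  if excluded_middle_informative (P x) then 1 else 0.

Definition smooth1 (f : R -> R) : Prop := forall (n : nat) (x : R), ex_derive_n f n x.

(* C^infty on R^2: a family of all iterated partial derivatives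
   (indexed by words over {d/dx = false, d/ds = true}), all continuous. *)
Definition smooth2 (f : R -> R -> R) : Prop :=
  exists D : list bool -> R -> R -> R,
    D nil = f /\
    forall (w : list bool) (x s : R),
      is_derive (fun y => D w y s) x (D (false :: w) x s) /\
      is_derive (fun t => D w x t) s (D (true :: w) x s) /\
      continuity_2d_pt (D w) x s.

Definition Zsum (a : Z -> R) : R :=
  Series (fun n => a (Z.of_nat n)) + Series (fun n => a (- Z.of_nat (S n))%Z).

(* phi_{i,j}(x,s) = phi((x,s) - (i,j)), with j = k + 1/2 in Z* *)
Definition phi_ij (phi : R -> R -> R) (i k : Z) (x s : R) : R :=
  phi (x - IZR i) (s - (IZR k + /2)).

(* Blocked path.  l i k stands for l(i, k + 1/2) (fixed omega). *)
Definition blocked_path (delta F : R) (chi : R -> R) (phi : R -> R -> R)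
  (l : Z -> Z -> R) (v : R -> R) : Prop :=
  (forall x, ex_derive v x /\ continuous (Derive v) x) /\
  forall i : Z,
    (forall x, IZR i + delta < x < IZR i + 1 - delta ->
       is_derive (Derive v) x (- F * chi x)) /\
    (forall x, IZR i - delta < x < IZR i + delta ->
       is_derive (Derive v) x (Zsum (fun k => l i k * phi_ij phi i k x (v x)))).

Definition vhat (delta : R) (v : R -> R) (i : Z) : R :=
  v (IZR i - delta) + 2 * delta * Derive v (IZR i - delta).

Definition disc_lap (f : Z -> R) (i : Z) : R :=
  f (i + 1)%Z - 2 * f i + f (i - 1)%Z.

(* Main.v *)
Require Import Defs.
From Stdlib Require Import Reals ZArith Lra Lia ClassicalDescription.
From Coquelicot Require Import Coquelicot.
Open Scope R_scope.

Lemma Zsum_nonneg a : (forall k, 0 <= a k) -> 0 <= Zsum a.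
Proof.
  intros Ha. unfold Zsum.
  assert (G : forall b : nat -> R, (forall n, 0 <= b n) -> 0 <= Series b).
  { intros b Hb. unfold Series.
    assert (Hle : Rbar_le (Lim_seq (fun _ => 0)) (Lim_seq (sum_n b))).
    { apply Lim_seq_le_loc. apply filter_forall. intros n.
      induction n. rewrite sum_O; auto. rewrite sum_Sn. unfold plus; simpl.
      specialize (Hb (S n)). lra. }
    rewrite Lim_seq_const in Hle.
    destruct (Lim_seq (sum_n b)); simpl in *; lra. }
  apply Rplus_le_le_0_compat; apply G; auto.
Qed.

Lemma per_nat (chi : R -> R) : (forall x, chi (x+1) = chi x) ->
  forall n x, chi (x + INR n) = chi x.
Proof.
  intros H n; induction n; intros x. simpl. f_equal; lra.
  rewrite S_INR. replace (x + (INR n + 1)) with ((x + INR n) + 1) by ring.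
  rewrite H; auto.
Qed.

Lemma per_Z (chi : R -> R) : (forall x, chi (x+1) = chi x) ->
  forall k x, chi (x + IZR k) = chi x.
Proof.
  intros H k x. destruct (Z_le_gt_dec 0 k).
  - rewrite <- (Z2Nat.id k) by lia. rewrite <- INR_IZR_INZ. apply per_nat; auto.
  - assert (E : (k = - Z.of_nat (Z.to_nat (-k)))%Z) by lia. rewrite E.
    rewrite opp_IZR, <- INR_IZR_INZ.
    set (n := Z.to_nat (-k)).
    rewrite <- (per_nat chi H n (x + - INR n)). f_equal; ring.
Qed.

Lemma shift_derive (f : R -> R) t D : is_derive f (t+1) D -> is_derive (fun s => f (s+1)) t D.
Proof. intros H.
  assert (Hg : is_derive (fun s : R => s + 1) t 1).
  { auto_derive; auto; ring. }
  pose proof (is_derive_comp f (fun s => s+1) t D 1 H Hg) as K.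
  change (scal 1 D) with (1 * D) in K. rewrite Rmult_1_l in K. exact K.
Qed.

Lemma cont_pt (f : R -> R) x : continuous f x -> continuity_pt f x.
Proof. intros H. apply continuity_pt_filterlim. exact H. Qed.

Lemma shift_cont (f : R -> R) t : continuous f (t+1) -> continuous (fun s => f (s+1)) t.
Proof. intros H. apply (continuous_comp (fun s => s+1) f). 
  apply (ex_derive_continuous (fun s : R => s+1)). auto_derive; auto. exact H. Qed.
Theorem mainTheorem5
  (delta F eps : R)
  (Hdelta : 0 < delta < /2) (HF : 0 < F) (Heps : 0 < eps < /2 - delta)
  (phi : R -> R -> R)
  (Hphi_smooth : smooth2 phi)
  (Hphi_nonneg : forall x s, 0 <= phi x s)
  (Hphi_supp : forall x s, delta < Rabs x \/ delta < Rabs s -> phi x s = 0)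
  (l : Z -> Z -> R) (Hl : forall i k, 0 <= l i k)
  (chi : R -> R)
  (Hchi_smooth : smooth1 chi)
  (Hchi_per : forall x, chi (x + 1) = chi x)
  (Hchi_low : forall x, indic (inAeps delta eps) x <= chi x)
  (Hchi_up : forall x, chi x <= indic (inA delta) x)
  (v : R -> R)
  (Hv : blocked_path delta F chi phi l v) :
  let Fhat := F * RInt chi delta (1 - delta) in
  F * (1 - 2 * (delta + eps)) <= Fhat <= (1 - 2 * delta) * F /\
  forall i : Z,
    - 2 * delta * (Derive v (IZR i - 1 + delta) - Derive v (IZR i - 1 - delta))
      <= disc_lap (vhat delta v) i + Fhat
      <= (1 + 2 * delta) * (Derive v (IZR i + delta) - Derive v (IZR i - delta)).
Proof.
  intros Fhat. unfold Fhat.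
  destruct Hv as [Hd Hi].
  assert (Hchic : forall x, continuous chi x).
  { intros x. apply (ex_derive_continuous chi). exact (Hchi_smooth 1%nat x). }
  assert (Hchi1 : forall x, chi x <= 1).
  { intros x. pose proof (Hchi_up x). unfold indic in H.
    destruct (excluded_middle_informative _); lra. }
  assert (Hchi0 : forall x, 0 <= chi x).
  { intros x. pose proof (Hchi_low x). unfold indic in H.
    destruct (excluded_middle_informative _); lra. }
  assert (Hex : forall a b, ex_RInt chi a b).
  { intros a b. apply (ex_RInt_continuous (V:=R_CompleteNormedModule) chi). intros; auto. }
  assert (HRup : RInt chi delta (1 - delta) <= 1 - 2 * delta).
  { apply Rle_trans with (RInt (fun _ => 1) delta (1 - delta)).
    apply RInt_le; auto; try lra. apply ex_RInt_const.
    intros; auto.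
    rewrite RInt_const. change (scal (1 - delta - delta) 1) with ((1 - delta - delta) * 1).
    lra. }
  assert (HRlow : 1 - 2 * (delta + eps) <= RInt chi delta (1 - delta)).
  { rewrite <- (RInt_Chasles chi delta (delta + eps) (1 - delta)); auto.
    rewrite <- (RInt_Chasles chi (delta + eps) (1 - delta - eps) (1 - delta)); auto.
    change plus with Rplus.
    assert (0 <= RInt chi delta (delta + eps)).
    { apply RInt_ge_0; [lra | auto | intros; auto]. }
    assert (0 <= RInt chi (1 - delta - eps) (1 - delta)).
    { apply RInt_ge_0; [lra | auto | intros; auto]. }
    assert (1 - 2 * (delta + eps) <= RInt chi (delta + eps) (1 - delta - eps)).
    { apply Rle_trans with (RInt (fun _ => 1) (delta + eps) (1 - delta - eps)).
      rewrite RInt_const. change (scal (1 - delta - eps - (delta + eps)) 1)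
        with ((1 - delta - eps - (delta + eps)) * 1). lra.
      apply RInt_le; auto; try lra. apply ex_RInt_const.
      intros x Hx. pose proof (Hchi_low x). unfold indic in H1.
      destruct (excluded_middle_informative _) as [_|n]; [lra|].
      exfalso. apply n. intros k. destruct (Z_le_gt_dec k 0) as [Hk|Hk].
      - apply IZR_le in Hk. unfold Rabs; destruct (Rcase_abs _); lra.
      - assert (1 <= IZR k) by (apply IZR_le; lia).
        unfold Rabs; destruct (Rcase_abs _); lra. }
    lra. }
  split.
  { split. apply Rmult_le_compat_l; lra.
    rewrite (Rmult_comm _ F). apply Rmult_le_compat_l; lra. }
  set (RI := RInt chi delta (1 - delta)).
  assert (Hvd : forall x, is_derive v x (Derive v x)).
  { intros x. apply Derive_correct. apply Hd. }
  assert (Hwc : forall x, continuous (Derive v) x) by (intros; apply Hd).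
  assert (Hvc : forall x, continuous v x).
  { intros x. apply (ex_derive_continuous v). apply Hd. }
  assert (Mono : forall j x y, IZR j - delta <= x -> x <= y -> y <= IZR j + delta ->
            Derive v x <= Derive v y).
  { intros j x y H1 H2 H3.
    destruct (MVT_gen (Derive v) x y
       (fun t => Zsum (fun k : Z => l j k * phi_ij phi j k t (v t)))) as [c [Hc Hm]].
    - intros t Ht. rewrite Rmin_left in Ht by lra. rewrite Rmax_right in Ht by lra.
      apply (proj2 (Hi j)). lra.
    - intros t Ht. apply cont_pt. auto.
    - assert (0 <= Zsum (fun k : Z => l j k * phi_ij phi j k c (v c))).
      { apply Zsum_nonneg. intros k. apply Rmult_le_pos; auto. unfold phi_ij; auto. }
      assert (0 <= Zsum (fun k : Z => l j k * phi_ij phi j k c (v c)) * (y - x)).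
      { apply Rmult_le_pos; lra. }
      lra. }
  assert (Jb : forall j, 2 * delta * Derive v (IZR j - delta) <= v (IZR j + delta) - v (IZR j - delta)
              <= 2 * delta * Derive v (IZR j + delta)).
  { intros j.
    destruct (MVT_gen v (IZR j - delta) (IZR j + delta) (Derive v)) as [c [Hc Hm]].
    - intros t Ht. auto.
    - intros t Ht. apply cont_pt. auto.
    - rewrite Rmin_left in Hc by lra. rewrite Rmax_right in Hc by lra.
      rewrite Hm.
      assert (Derive v (IZR j - delta) <= Derive v c) by (apply (Mono j); lra).
      assert (Derive v c <= Derive v (IZR j + delta)) by (apply (Mono j); lra).
      split; nra. }
  assert (Gap : forall j, Derive v (IZR j + 1 - delta) = Derive v (IZR j + delta) - F * RI).
  { intros j.
    set (g := fun x => Derive v x + F * RInt chi (IZR j + delta) x).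
    assert (Hgd : forall x, is_derive (fun y => F * RInt chi (IZR j + delta) y) x (F * chi x)).
    { intros x. apply (is_derive_scal (fun y => RInt chi (IZR j + delta) y)).
      apply (is_derive_RInt chi _ (IZR j + delta)). apply filter_forall. intros y. apply (RInt_correct (V:=R_CompleteNormedModule)). auto.
      auto. }
    destruct (MVT_gen g (IZR j + delta) (IZR j + 1 - delta) (fun _ => 0)) as [c [Hc Hm]].
    - intros t Ht. rewrite Rmin_left in Ht by lra. rewrite Rmax_right in Ht by lra.
      unfold g. replace 0 with (- F * chi t + F * chi t) by ring.
      apply (is_derive_plus (Derive v)). apply (proj1 (Hi j)). lra. apply Hgd.
    - intros t Ht. apply cont_pt. unfold g.
      apply (continuous_plus (Derive v)). auto.
      apply (ex_derive_continuous (fun y => F * RInt chi (IZR j + delta) y)).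
      eexists. apply Hgd.
    - unfold g in Hm. rewrite RInt_point in Hm.
      assert (E : RInt chi (IZR j + delta) (IZR j + 1 - delta) = RI).
      { unfold RI. 
        pose proof (RInt_comp_lin (V:=R_CompleteNormedModule) chi 1 (IZR j) delta (1 - delta)) as K.
        replace (1 * delta + IZR j) with (IZR j + delta) in K by ring.
        replace (1 * (1 - delta) + IZR j) with (IZR j + 1 - delta) in K by ring.
        rewrite <- K by auto. apply RInt_ext. intros x _.
        change (scal 1 (chi (1 * x + IZR j))) with (1 * chi (1 * x + IZR j)).
        rewrite !Rmult_1_l. apply per_Z; auto. }
      rewrite E in Hm. change (zero : R) with 0 in Hm. lra. }
  assert (Sh : forall i, v (IZR i + 1 - delta) - v (IZR i + delta) - v (IZR i - delta) + v (IZR i - 1 + delta)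
             = (1 - 2 * delta) * (Derive v (IZR i + delta) - Derive v (IZR i - 1 + delta))).
  { intros i.
    set (a := IZR i - 1 + delta). set (b := IZR i - delta).
    set (c := Derive v (IZR i + delta) - Derive v a).
    set (q := fun t => Derive v (t + 1) - Derive v t).
    assert (Hqd : forall t, a < t < b -> is_derive q t 0).
    { intros t Ht. unfold q. replace 0 with (- F * chi (t + 1) - - F * chi t)
        by (rewrite Hchi_per; ring).
      apply (is_derive_minus (fun s => Derive v (s + 1))).
      apply shift_derive. apply (proj1 (Hi i)). unfold a, b in Ht; lra.
      apply (proj1 (Hi (i - 1)%Z)). rewrite minus_IZR. unfold a, b in Ht; lra. }
    assert (Hqc : forall t, continuous q t).
    { intros t. unfold q. apply (continuous_minus (fun s => Derive v (s + 1))).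
      apply shift_cont. auto. auto. }
    assert (Hq : forall x, a <= x <= b -> q x = c).
    { intros x Hx.
      destruct (MVT_gen q a x (fun _ => 0)) as [e [He Hm]].
      - intros t Ht. rewrite Rmin_left in Ht by lra. rewrite Rmax_right in Ht by lra.
        apply Hqd. lra.
      - intros t _. apply cont_pt. auto.
      - unfold c. replace (IZR i + delta) with (a + 1) by (unfold a; ring).
        change (Derive v (a + 1) - Derive v a) with (q a). lra. }
    set (h := fun t => v (t + 1) - v t - c * t).
    destruct (MVT_gen h a b (fun _ => 0)) as [e [He Hm]].
    - intros t Ht. rewrite Rmin_left in Ht by (unfold a, b; lra).
      rewrite Rmax_right in Ht by (unfold a, b; lra).
      unfold h. replace 0 with (q t - c * 1) by (rewrite Hq; [ring | lra]).
      unfold q. apply (is_derive_minus (fun t => v (t + 1) - v t)).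
      apply (is_derive_minus (fun s => v (s + 1))). apply shift_derive. auto. auto.
      apply (is_derive_scal (fun t => t)). apply (is_derive_id (K:=R_AbsRing)).
    - intros t _. apply cont_pt. unfold h.
      apply (continuous_minus (fun t => v (t + 1) - v t)).
      apply (continuous_minus (fun s => v (s + 1))). apply shift_cont. auto. auto.
      apply (ex_derive_continuous (fun t => c * t)). auto_derive. auto.
    - unfold h in Hm.
      replace (IZR i + 1 - delta) with (b + 1) by (unfold b; ring).
      replace (IZR i + delta) with (a + 1) by (unfold a; ring).
      fold b a. unfold c in Hm |- *. unfold a, b in Hm |- *.
      replace (IZR i - 1 + delta + 1) with (IZR i + delta) in Hm |- * by ring.
      nra. }
  intros i. unfold disc_lap, vhat. rewrite plus_IZR, minus_IZR.
  pose proof (Gap i) as G1.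
  pose proof (Gap (i - 1)%Z) as G2. rewrite minus_IZR in G2.
  replace (IZR i - 1 + 1 - delta) with (IZR i - delta) in G2 by ring.
  pose proof (Sh i) as S1.
  pose proof (Jb i) as J1. pose proof (Jb (i - 1)%Z) as J2. rewrite minus_IZR in J2.
  assert (M1 : Derive v (IZR i - delta) <= Derive v (IZR i + delta)) by (apply (Mono i); lra).
  assert (M2 : Derive v (IZR i - 1 - delta) <= Derive v (IZR i - 1 + delta)).
  { apply (Mono (i - 1)%Z); rewrite ?minus_IZR; lra. }
  split; nra.
Qed.
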